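(* Let $S\in(0,1)$ and let $f_S,f_C,h_S,h_C>0$ satisfy the dominance assumption $f_S>h_C$ and $f_C>h_S$. Put $r_S=f_S/h_S$ and $r_C=f_C/h_C$. For the planar system \[ SB' = f_S\,SB\,(S-SB) - h_S\,CR\cdot SB,\qquad CR' = f_C\,CR\,(1-S-CR) - h_C\,SB\cdot CR, \] the following hold: (i) the equilibrium $(SB,CR)=(0,0)$ (i.e. $SR=S$, $CB=1-S$) is never stable; (ii) the Blue-victory equilibrium $(SB,CR)=(S,0)$ (i.e. $SR=CR=0$, $CB=1-S$) is stable if and only if $r_C<\frac{S}{1-S}$; (iii) the Red-victory equilibrium $(SB,CR)=(0,1-S)$ (i.e. $SB=CB=0$, $SR=S$) is stable if and only if $r_S<\frac{1-S}{S}$; (iv) the stalemate equilibrium $(SB_b,CR_b)$ is stable if and only if $\frac{1}{1+r_S}<S<\frac{r_C}{1+r_C}$, equivalently $r_C>\frac{S}{1-S}$ and $r_S>\frac{1-S}{S}$, where \[ CB_b=\frac{S(1+r_S)-1}{r_Sr_C-1},\quad SR_b=\frac{r_C-S(1+r_C)}{r_Sr_C-1},\quad SB_b=r_C\,CB_b,\quad CR_b=r_S\,SR_b . \] Moreover, the conditions in (ii) and (iii) cannot hold simultaneously.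
   Context: Basic armed-revolt model. A population of total size $1$ is split into supporters of Blue, a fixed fraction $S\in(0,1)$, and contrarians (supporters of Red), a fraction $1-S$. The variables $SB,SR,CR,CB\ge 0$ are the fractions of the total population that are, respectively, supporters controlled by Blue, supporters controlled by Red, contrarians controlled by Red, contrarians controlled by Blue, with $SB+SR=S$ and $CR+CB=1-S$. This reduces the model to the planar system in $(SB,CR)$ given in the claim. An equilibrium is called stable when all eigenvalues of the Jacobian of the planar system's right-hand side, evaluated at that equilibrium, have negative real part. Under the dominance assumption $r_Sr_C>1$, so the denominators in the stalemate formulas are positive. *)

(* Defs.v *)
From Stdlib Require Import Reals Lra.
Open Scope R_scope.

Definition SBdot (S fS hS : R) (SB CR : R) : R :=
  fS * SB * (S - SB) - hS * CR * SB.
Definition CRdot (S fC hC : R) (SB CR : R) : R :=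
  fC * CR * (1 - S - CR) - hC * SB * CR.

Record mat2 : Type := Mat2 { m11 : R; m12 : R; m21 : R; m22 : R }.

Definition is_jacobian (F G : R -> R -> R) (x y : R) (J : mat2) : Prop :=
  derivable_pt_lim (fun u => F u y) x (m11 J) /\
  derivable_pt_lim (fun v => F x v) y (m12 J) /\
  derivable_pt_lim (fun u => G u y) x (m21 J) /\
  derivable_pt_lim (fun v => G x v) y (m22 J).

(* Complex numbers as pairs (re, im), with their ring operations. *)
Definition Cx := (R * R)%type.
Definition Cx_sub (z w : Cx) : Cx := (fst z - fst w, snd z - snd w).
Definition Cx_mul (z w : Cx) : Cx :=
  (fst z * fst w - snd z * snd w, fst z * snd w + snd z * fst w).
Definition Cx_of_R (a : R) : Cx := (a, 0).

(* z is a (complex) eigenvalue of J: det (z I - J) = 0. *)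
Definition is_eigenvalue (J : mat2) (z : Cx) : Prop :=
  Cx_sub (Cx_mul (Cx_sub z (Cx_of_R (m11 J))) (Cx_sub z (Cx_of_R (m22 J))))
         (Cx_of_R (m12 J * m21 J)) = (0, 0).

Definition stable_at (F G : R -> R -> R) (x y : R) : Prop :=
  exists J : mat2, is_jacobian F G x y J /\
    forall z : Cx, is_eigenvalue J z -> fst z < 0.

(* Main.v *)
Require Import Defs.
From Stdlib Require Import Reals Lra Psatz.
From Coquelicot Require Import Coquelicot.
Open Scope R_scope.

Definition Jm (S fS fC hS hC x y : R) : mat2 :=
  Mat2 (fS*(S-2*x) - hS*y) (-(hS*x)) (-(hC*y)) (fC*(1-S-2*y) - hC*x).

Lemma jac_ok S fS fC hS hC x y :
  is_jacobian (SBdot S fS hS) (CRdot S fC hC) x y (Jm S fS fC hS hC x y).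
Proof.
  unfold is_jacobian, SBdot, CRdot, Jm; simpl.
  repeat split; apply is_derive_Reals; auto_derive; auto; ring.
Qed.

Lemma eig_neg (J : mat2) z :
  m11 J + m22 J < 0 -> m11 J * m22 J - m12 J * m21 J > 0 ->
  is_eigenvalue J z -> fst z < 0.
Proof.
  destruct J as [a b c d]; destruct z as [x y]; simpl.
  unfold is_eigenvalue, Cx_sub, Cx_mul, Cx_of_R; simpl.
  intros Ht Hd E. injection E; intros E2 E1.
  assert (Hy : y * (2*x - a - d) = 0) by lra.
  destruct (Req_dec y 0) as [->|Hy0].
  - destruct (Rlt_or_le x 0); auto. nra.
  - apply Rmult_integral in Hy; destruct Hy; [contradiction|lra].
Qed.

Lemma eig_exists (J : mat2) :
  ~ (m11 J + m22 J < 0 /\ m11 J * m22 J - m12 J * m21 J > 0) ->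
  exists z, is_eigenvalue J z /\ 0 <= fst z.
Proof.
  destruct J as [a b c d]; simpl. intros H.
  unfold is_eigenvalue, Cx_sub, Cx_mul, Cx_of_R; simpl.
  set (tr := a + d). set (dt := a*d - b*c).
  assert (Hor : tr >= 0 \/ dt <= 0).
  { destruct (Rlt_or_le tr 0); [|left; lra].
    destruct (Rlt_or_le 0 dt); [|right; lra]. exfalso; apply H; split; assumption. }
  clear H.
  set (D := tr*tr - 4*dt).
  destruct (Rle_or_lt 0 D) as [HD|HD].
  - exists ((tr + sqrt D)/2, 0). simpl.
    pose proof (sqrt_sqrt D HD). pose proof (sqrt_pos D).
    split.
    + f_equal; [|ring]. fold tr. fold dt. fold D.
      set (s := sqrt D) in *. unfold D, tr, dt in *. nra.
    + destruct Hor; [nra|]. assert (tr * tr <= D) by (unfold D; lra).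
      assert (Rabs tr <= sqrt D).
      { rewrite <- sqrt_Rsqr_abs. apply sqrt_le_1_alt. unfold Rsqr. lra. }
      unfold Rabs in *; destruct (Rcase_abs tr); lra.
  - assert (HD' : 0 <= - D) by lra.
    exists (tr/2, sqrt (-D)/2). simpl.
    pose proof (sqrt_sqrt (-D) HD').
    split.
    + fold tr. fold dt. fold D. set (s := sqrt (-D)) in *.
      f_equal; unfold D, tr, dt in *; nra.
    + destruct Hor; [lra|]. unfold D in HD. nra.
Qed.

Lemma stable_iff S fS fC hS hC x y :
  stable_at (SBdot S fS hS) (CRdot S fC hC) x y <->
  (m11 (Jm S fS fC hS hC x y) + m22 (Jm S fS fC hS hC x y) < 0 /\
   m11 (Jm S fS fC hS hC x y) * m22 (Jm S fS fC hS hC x y)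
   - m12 (Jm S fS fC hS hC x y) * m21 (Jm S fS fC hS hC x y) > 0).
Proof.
  split.
  - intros [J [HJ Hs]].
    pose proof (jac_ok S fS fC hS hC x y) as HJ0.
    destruct HJ as [A1 [A2 [A3 A4]]]; destruct HJ0 as [B1 [B2 [B3 B4]]].
    assert (E1 := uniqueness_limite _ _ _ _ A1 B1).
    assert (E2 := uniqueness_limite _ _ _ _ A2 B2).
    assert (E3 := uniqueness_limite _ _ _ _ A3 B3).
    assert (E4 := uniqueness_limite _ _ _ _ A4 B4).
    destruct (Classical_Prop.classic
      (m11 J + m22 J < 0 /\ m11 J * m22 J - m12 J * m21 J > 0)) as [Hc|Hc].
    + rewrite <- E1, <- E2, <- E3, <- E4. exact Hc.
    + destruct (eig_exists J Hc) as [z [Hz Hz0]]. specialize (Hs z Hz). lra.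
  - intros [H1 H2]. exists (Jm S fS fC hS hC x y). split.
    + apply jac_ok.
    + intros z Hz. apply (eig_neg _ z H1 H2 Hz).
Qed.

Theorem theorem1 (S fS fC hS hC : R)
  (hS0 : 0 < S) (hS1 : S < 1)
  (hfS : 0 < fS) (hfC : 0 < fC) (hhS : 0 < hS) (hhC : 0 < hC)
  (hdom1 : fS > hC) (hdom2 : fC > hS) :
  let rS := fS / hS in
  let rC := fC / hC in
  let F := SBdot S fS hS in
  let G := CRdot S fC hC in
  let CBb := (S * (1 + rS) - 1) / (rS * rC - 1) in
  let SRb := (rC - S * (1 + rC)) / (rS * rC - 1) in
  let SBb := rC * CBb in
  let CRb := rS * SRb in
  (* (i) *)
  ~ stable_at F G 0 0 /\
  (* (ii) *)
  (stable_at F G S 0 <-> rC < S / (1 - S)) /\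
  (* (iii) *)
  (stable_at F G 0 (1 - S) <-> rS < (1 - S) / S) /\
  (* (iv) *)
  (stable_at F G SBb CRb <-> (1 / (1 + rS) < S /\ S < rC / (1 + rC))) /\
  ((1 / (1 + rS) < S /\ S < rC / (1 + rC)) <->
     (rC > S / (1 - S) /\ rS > (1 - S) / S)) /\
  (* moreover *)
  ~ (rC < S / (1 - S) /\ rS < (1 - S) / S).
Proof.
  intros rS rC F G CBb SRb SBb CRb.
  assert (HrS : hS * rS = fS) by (unfold rS; field; lra).
  assert (HrC : hC * rC = fC) by (unfold rC; field; lra).
  assert (rS0 : 0 < rS) by (unfold rS; apply Rdiv_lt_0_compat; lra).
  assert (rC0 : 0 < rC) by (unfold rC; apply Rdiv_lt_0_compat; lra).
  assert (Hpq : fS * fC > hS * hC) by nra.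
  assert (HD : rS * rC - 1 > 0) by nra.
  set (t1 := S / (1 - S)). assert (Ht1 : t1 * (1 - S) = S) by (unfold t1; field; lra).
  set (t2 := (1 - S) / S). assert (Ht2 : t2 * S = 1 - S) by (unfold t2; field; lra).
  set (t3 := 1 / (1 + rS)). assert (Ht3 : t3 * (1 + rS) = 1) by (unfold t3; field; lra).
  set (t4 := rC / (1 + rC)). assert (Ht4 : t4 * (1 + rC) = rC) by (unfold t4; field; lra).
  assert (HCB : CBb * (rS * rC - 1) = S * (1 + rS) - 1) by (unfold CBb; field; lra).
  assert (HSR : SRb * (rS * rC - 1) = rC - S * (1 + rC)) by (unfold SRb; field; lra).
  assert (E1 : SBb + SRb = S).
  { unfold SBb, SRb, CBb. field. lra. }
  assert (E2 : CRb + CBb = 1 - S).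
  { unfold CRb, SRb, CBb. field. lra. }
  assert (P5 : (t3 < S /\ S < t4) <-> (rC > t1 /\ rS > t2)).
  { split; intros [A B]; split; nra. }
  assert (KA : t3 < S <-> CBb > 0).
  { assert (e : S * (1 + rS) - 1 = (S - t3) * (1 + rS)) by (rewrite <- Ht3 at 2; ring).
    split; intro Z.
    - assert (CBb * (rS * rC - 1) > 0).
      { rewrite HCB, e. apply Rmult_lt_0_compat; lra. }
      destruct (Rlt_or_le 0 CBb); auto.
      assert (CBb * (rS * rC - 1) <= 0) by (apply Rmult_le_0_r; lra). lra.
    - assert ((S - t3) * (1 + rS) > 0).
      { rewrite <- e, <- HCB. apply Rmult_lt_0_compat; lra. }
      destruct (Rlt_or_le t3 S); auto.
      assert ((S - t3) * (1 + rS) <= 0) by (apply Rmult_le_0_r; lra). lra. }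
  assert (KB : S < t4 <-> SRb > 0).
  { assert (e : rC - S * (1 + rC) = (t4 - S) * (1 + rC)) by (rewrite <- Ht4 at 1; ring).
    split; intro Z.
    - assert (SRb * (rS * rC - 1) > 0).
      { rewrite HSR, e. apply Rmult_lt_0_compat; lra. }
      destruct (Rlt_or_le 0 SRb); auto.
      assert (SRb * (rS * rC - 1) <= 0) by (apply Rmult_le_0_r; lra). lra.
    - assert ((t4 - S) * (1 + rC) > 0).
      { rewrite <- e, <- HSR. apply Rmult_lt_0_compat; lra. }
      destruct (Rlt_or_le S t4); auto.
      assert ((t4 - S) * (1 + rC) <= 0) by (apply Rmult_le_0_r; lra). lra. }
  unfold F, G. split; [|split; [|split; [|split; [|split]]]].
  - intro H. rewrite stable_iff in H; simpl in H. destruct H as [A B]. nra.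
  - split.
  + rewrite stable_iff; simpl. intros [A B].
    assert (Hd : fC * (1 - S - 2 * 0) - hC * S < 0) by nra.
    assert (hC * (rC * (1 - S)) < hC * (t1 * (1 - S))) by nra.
    assert (rC * (1 - S) < t1 * (1 - S)) by nra. nra.
  + intro H. rewrite stable_iff; simpl.
    assert (rC * (1 - S) < t1 * (1 - S)) by (apply Rmult_lt_compat_r; lra).
    assert (hC * (rC * (1 - S)) < hC * (t1 * (1 - S))) by (apply Rmult_lt_compat_l; lra).
    replace (hC * (rC * (1 - S))) with (fC * (1 - S)) in H1 by (rewrite <- HrC; ring).
    replace (hC * (t1 * (1 - S))) with (hC * S) in H1 by (rewrite Ht1; ring).
    assert (Hd : fC * (1 - S - 2 * 0) - hC * S < 0) by lra. 
    assert (fS * S > 0) by (apply Rmult_lt_0_compat; lra). split; [lra|].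
    apply Rlt_gt. replace (_ - _) with ((fS * S) * (-(fC * (1 - S - 2 * 0) - hC * S))) by ring.
    apply Rmult_lt_0_compat; lra.
  - split.
  + rewrite stable_iff; simpl. intros [A B].
    assert (Ha : fS * (S - 2 * 0) - hS * (1 - S) < 0) by nra.
    assert (hS * (rS * S) < hS * (t2 * S)) by nra.
    assert (rS * S < t2 * S) by nra. nra.
  + intro H. rewrite stable_iff; simpl.
    assert (rS * S < t2 * S) by (apply Rmult_lt_compat_r; lra).
    assert (hS * (rS * S) < hS * (t2 * S)) by (apply Rmult_lt_compat_l; lra).
    replace (hS * (rS * S)) with (fS * S) in H1 by (rewrite <- HrS; ring).
    replace (hS * (t2 * S)) with (hS * (1 - S)) in H1 by (rewrite Ht2; ring).
    assert (Ha : fS * (S - 2 * 0) - hS * (1 - S) < 0) by lra.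
    assert (fC * (1 - S) > 0) by (apply Rmult_lt_0_compat; lra). split; [lra|].
    apply Rlt_gt. replace (_ - _) with ((fC * (1 - S)) * (-(fS * (S - 2 * 0) - hS * (1 - S)))) by ring.
    apply Rmult_lt_0_compat; lra.
  - split.
  + rewrite stable_iff; simpl. intros [A B].
    assert (Ha : fS * (S - 2 * SBb) - hS * CRb = - (fS * SBb)).
    { unfold CRb. replace (S - 2*SBb) with (SRb - SBb) by lra. nra. }
    assert (Hd : fC * (1 - S - 2 * CRb) - hC * SBb = - (fC * CRb)).
    { unfold SBb. replace (1 - S - 2*CRb) with (CBb - CRb) by lra. nra. }
    rewrite Ha, Hd in A, B.
    assert (Hpq2 : SBb * CRb > 0) by nra.
    assert (SBb > 0 /\ CRb > 0) as [P Q] by nra.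
    unfold SBb in P; unfold CRb in Q.
    assert (CBb > 0) by nra. assert (SRb > 0) by nra.
    split; [apply KA|apply KB]; assumption.
  + intros [A B]. rewrite stable_iff; simpl.
    assert (Ha : fS * (S - 2 * SBb) - hS * CRb = - (fS * SBb)).
    { unfold CRb. replace (S - 2*SBb) with (SRb - SBb) by lra. nra. }
    assert (Hd : fC * (1 - S - 2 * CRb) - hC * SBb = - (fC * CRb)).
    { unfold SBb. replace (1 - S - 2*CRb) with (CBb - CRb) by lra. nra. }
    rewrite Ha, Hd.
    assert (CBb > 0) by (apply KA; exact A). assert (SRb > 0) by (apply KB; exact B).
    assert (P : SBb > 0) by (unfold SBb; nra).
    assert (Q : CRb > 0) by (unfold CRb; nra).
    assert (fS * SBb > 0) by (apply Rmult_lt_0_compat; lra).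
    assert (fC * CRb > 0) by (apply Rmult_lt_0_compat; lra).
    split; [lra|].
    apply Rlt_gt. replace (_ - _) with ((SBb * CRb) * (fS * fC - hS * hC)) by ring.
    apply Rmult_lt_0_compat; [apply Rmult_lt_0_compat|]; lra.
  - exact P5.
  - intros [A B]. nra.
Qed.
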